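(* Let $\mathcal G$ be a finite connected groupoid and $\alpha=(S_g,\alpha_g)_{g\in\mathcal G}$ a unital group-type partial action of $\mathcal G$ on a ring $S=\bigoplus_{y\in\mathcal G_0}S_y$, with $S_g=S1_g$. Let $x\in\mathcal G_0$ and $\tau=\{\tau_y\}_{y\in\mathcal G_0}$ a transversal in $\mathcal G$ for $x$ with $S_{\tau_y^{-1}}=S_x$ and $S_{\tau_y}=S_y$ for all $y\in\mathcal G_0$. Then the map $\Phi_\tau:S_x^{\alpha_{\mathcal G(x)}}\to S^{\alpha_{\mathcal G}}$, $\Phi_\tau(a)=\sum_{y\in\mathcal G_0}\alpha_{\tau_y}(a)$, is a ring isomorphism.
   Context: A groupoid is a small category with all morphisms invertible; $\mathcal G_0$ is the set of objects (identified with identity morphisms), $s(g),t(g)$ source and target, $\mathcal G(x,y)=\{g:s(g)=x,t(g)=y\}$, $\mathcal G(x)=\mathcal G(x,x)$; $gh$ is defined iff $s(g)=t(h)$; connected means all $\mathcal G(x,y)\ne\emptyset$. A partial action $\alpha=(S_g,\alpha_g)_{g\in\mathcal G}$ on a ring $S$: for each $g$, $S_{t(g)}$ is an ideal of $S$, $S_g$ an ideal of $S_{t(g)}$, $\alpha_g:S_{g^{-1}}\to S_g$ a ring isomorphism; $\alpha_x=\mathrm{id}_{S_x}$ for $x\in\mathcal G_0$; for composable $(g,h)$, $\alpha_h^{-1}(S_{g^{-1}}\cap S_h)\subseteq S_{(gh)^{-1}}$ and $\alpha_g\alpha_h(a)=\alpha_{gh}(a)$ there. Unital: $S_g=S1_g$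 with $1_g$ a central idempotent. A transversal for $x$ is $\{\tau_y\}_{y\in\mathcal G_0}$ with $\tau_y\in\mathcal G(x,y)$, $\tau_x=x$; $\alpha$ is group-type if some $x$ and transversal satisfy $S_{\tau_y^{-1}}=S_x$, $S_{\tau_y}=S_y$ for all $y$. Invariants: $S^{\alpha_{\mathcal G}}=\{a\in S:\alpha_g(a1_{g^{-1}})=a1_g\ \forall g\in\mathcal G\}$ and $S_x^{\alpha_{\mathcal G(x)}}=\{a\in S_x:\alpha_g(a1_{g^{-1}})=a1_g\ \forall g\in\mathcal G(x)\}$ (the isotropy group $\mathcal G(x)$ acts partially on $S_x$ by $(S_g,\alpha_g)_{g\in\mathcal G(x)}$). *)

(* Defs.v *)
From mathcomp Require Import all_boot all_order all_algebra.
Set Implicit Arguments. Unset Strict Implicit. Unset Printing Implicit Defensive.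
Import GRing.Theory.
Local Open Scope ring_scope.

(* (objects are identified with identity morphisms via [idm]); [comp g h]  *)
(* is the composite gh, meaningful when [src g = tgt h]; [inv g] = g^-1.   *)
Definition is_groupoid (O G : Type) (src tgt : G -> O) (idm : O -> G)
    (comp : G -> G -> G) (inv : G -> G) : Prop :=
  [/\ (forall x, src (idm x) = x /\ tgt (idm x) = x),
      (forall g h, src g = tgt h -> src (comp g h) = src h /\ tgt (comp g h) = tgt g),
      (forall g h k, src g = tgt h -> src h = tgt k ->
          comp (comp g h) k = comp g (comp h k)),
      (forall g, comp (idm (tgt g)) g = g /\ comp g (idm (src g)) = g) &
      (forall g, [/\ src (inv g) = tgt g, tgt (inv g) = src g,
                    comp g (inv g) = idm (tgt g) & comp (inv g) g = idm (src g)])].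

Definition groupoid_connected (O G : Type) (src tgt : G -> O) : Prop :=
  forall x y : O, exists g : G, src g = x /\ tgt g = y.

(* Unital data: S_g = S 1_g with 1_g a central idempotent.                  *)
Definition central_idempotent (S : pzRingType) (e : S) : Prop :=
  e * e = e /\ forall a : S, a * e = e * a.

Definition inS (S : pzRingType) (G : Type) (e : G -> S) (g : G) (a : S) : Prop :=
  exists b : S, a = b * e g.

(* f : S_dom -> S_cod (as a total map on S) is a ring isomorphism *)
Definition ring_iso_on (S : pzRingType) (Dom Cod : S -> Prop) (f : S -> S) : Prop :=
  [/\ (forall a b, Dom a -> Dom b -> f (a + b) = f a + f b),
      (forall a b, Dom a -> Dom b -> f (a * b) = f a * f b),
      (forall a, Dom a -> Cod (f a)),
      (forall a b, Dom a -> Dom b -> f a = f b -> a = b) &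
      (forall c, Cod c -> exists2 a, Dom a & f a = c)].

Definition internal_direct_sum (S : pzRingType) (O : finType) (P : O -> S -> Prop) : Prop :=
  (forall a : S, exists f : O -> S, (forall y, P y (f y)) /\ a = \sum_(y : O) f y) /\
  (forall f : O -> S, (forall y, P y (f y)) -> \sum_(y : O) f y = 0 -> forall y, f y = 0).

Definition unital_partial_action (O G : Type) (src tgt : G -> O) (idm : O -> G)
    (comp : G -> G -> G) (inv : G -> G) (S : pzRingType) (e : G -> S)
    (alpha : G -> S -> S) : Prop :=
  [/\ (forall g, central_idempotent (e g)),
      (forall g a, inS e g a -> inS e (idm (tgt g)) a),
      (forall g, ring_iso_on (inS e (inv g)) (inS e g) (alpha g)),
      (forall x a, inS e (idm x) a -> alpha (idm x) a = a) &
      (forall g h, src g = tgt h -> forall a, inS e (inv h) a ->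
          inS e (inv g) (alpha h a) -> inS e h (alpha h a) ->
          inS e (inv (comp g h)) a /\ alpha g (alpha h a) = alpha (comp g h) a)].

Definition invariants (G : Type) (inv : G -> G) (S : pzRingType) (e : G -> S)
    (alpha : G -> S -> S) (a : S) : Prop :=
  forall g : G, alpha g (a * e (inv g)) = a * e g.

Definition local_invariants (O G : Type) (src tgt : G -> O) (idm : O -> G)
    (inv : G -> G) (S : pzRingType) (e : G -> S) (alpha : G -> S -> S) (x : O) (a : S) : Prop :=
  inS e (idm x) a /\
  forall g : G, src g = x -> tgt g = x -> alpha g (a * e (inv g)) = a * e g.

Definition Phi (O : finType) (G : Type) (S : pzRingType) (alpha : G -> S -> S)
    (tau : O -> G) (a : S) : S :=
  \sum_(y : O) alpha (tau y) a.

(* Main.v *)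
Require Import Defs.
From mathcomp Require Import all_boot all_order all_algebra.
Import GRing.Theory.
Local Open Scope ring_scope.

Theorem corollary3p2
  (O G : finType) (src tgt : G -> O) (idm : O -> G)
  (comp : G -> G -> G) (inv : G -> G)
  (S : pzRingType) (e : G -> S) (alpha : G -> S -> S)
  (x : O) (tau : O -> G) :
  is_groupoid src tgt idm comp inv ->
  groupoid_connected src tgt ->
  unital_partial_action src tgt idm comp inv e alpha ->
  internal_direct_sum (fun y => inS e (idm y)) ->
  (* tau is a transversal for x *)
  (forall y, src (tau y) = x /\ tgt (tau y) = y) ->
  tau x = idm x ->
  (* group-type conditions *)
  (forall y a, inS e (inv (tau y)) a <-> inS e (idm x) a) ->
  (forall y a, inS e (tau y) a <-> inS e (idm y) a) ->
  (* Phi_tau : S_x^{alpha_{G(x)}} -> S^{alpha_G} is a ring isomorphism *)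
  (forall a, local_invariants src tgt idm inv e alpha x a ->
          invariants inv e alpha (Phi alpha tau a)) /\
  [/\ (forall a b, local_invariants src tgt idm inv e alpha x a ->
          local_invariants src tgt idm inv e alpha x b ->
          Phi alpha tau (a + b) = Phi alpha tau a + Phi alpha tau b),
      (forall a b, local_invariants src tgt idm inv e alpha x a ->
          local_invariants src tgt idm inv e alpha x b ->
          Phi alpha tau (a * b) = Phi alpha tau a * Phi alpha tau b),
      Phi alpha tau (e (idm x)) = 1,
      (forall a b, local_invariants src tgt idm inv e alpha x a ->
          local_invariants src tgt idm inv e alpha x b ->
          Phi alpha tau a = Phi alpha tau b -> a = b) &
      (forall c, invariants inv e alpha c ->
          exists2 a, local_invariants src tgt idm inv e alpha x a &
                     Phi alpha tau a = c)].
Proof.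
move=> Hg _ [Hidem Hideal Hiso Hid Hcomp] [Hds1 Hds2] Htau Htaux Hgt1 Hgt2.
case: Hg => Hsrcid Hcompst Hassoc Hunit Hinv.
have eC : forall g a, a * e g = e g * a by move=> g; exact: (Hidem g).2.
have inSE : forall g a, inS e g a <-> a = a * e g.
  move=> g a; split; last by move=> ->; exists a.
  by case=> b ->; rewrite -mulrA (Hidem g).1.
have inS_e : forall g, inS e g (e g) by move=> g; exists (e g); rewrite (Hidem g).1.
have inS_mulr : forall g a b, inS e g a -> inS e g (b * a).
  by move=> g a b [c ->]; exists (b * c); rewrite mulrA.
have inS_mull : forall g a b, inS e g a -> inS e g (a * b).
  by move=> g a b [c ->]; exists (c * b); rewrite -mulrA -eC mulrA.
have eq_e : forall g h, (forall a, inS e g a <-> inS e h a) -> e g = e h.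
  move=> g h H.
  have /inSE H1 : inS e h (e g) by apply/H.
  have /inSE H2 : inS e g (e h) by apply/H.
  by rewrite {1}H1 eC -H2.
have einvtau : forall y, e (inv (tau y)) = e (idm x) by move=> y; apply: eq_e; apply: Hgt1.
have etau : forall y, e (tau y) = e (idm y) by move=> y; apply: eq_e; apply: Hgt2.
have invK : forall g, inv (inv g) = g.
  move=> g; set h := inv g.
  have [sh th gh hg] := Hinv g.
  have [sih tih hih ihh] := Hinv h.
  have E1 : g = comp g (comp h (inv h)) by rewrite hih th (Hunit g).2.
  rewrite {1}E1 -Hassoc; first by rewrite gh -sh -tih (Hunit (inv h)).1.
    by rewrite th.
  by rewrite tih.
have orth : forall y z, y != z -> e (idm y) * e (idm z) = 0.
  move=> y z nyz; set p := e (idm y) * e (idm z).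
  have py : inS e (idm y) p by rewrite /p eC; apply: inS_mulr.
  have pz : inS e (idm z) p by apply: inS_mulr.
  pose f u := (if u == y then p else 0) + (if u == z then - p else 0).
  have := Hds2 f.
  have Hf : forall u, inS e (idm u) (f u).
    move=> u; rewrite /f; case: eqP => [Hy|_]; case: eqP => [Hz|_].
    - by move: nyz; rewrite -Hy Hz eqxx.
    - by rewrite addr0 Hy.
    - by rewrite add0r Hz; case: pz => b ->; exists (- b); rewrite mulNr.
    - by rewrite addr0; exists 0; rewrite mul0r.
  move=> /(_ Hf) H; have := H _ y; rewrite /f eqxx (negbTE nyz) addr0; apply.
  rewrite big_split /= -!big_mkcond /= !big_pred1_eq; exact: subrr.
have sum1 : \sum_y e (idm y) = 1.
  have [f [Hf E]] := Hds1 1.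
  have fe : forall z, f z = e (idm z).
    move=> z; have : 1 * e (idm z) = f z.
      rewrite E mulr_suml (bigD1 z) //= big1 ?addr0; first by apply/esym/inSE.
      move=> y nyz; have /inSE -> := Hf y; by rewrite -mulrA orth ?mulr0.
    by rewrite mul1r.
  by rewrite E; apply: eq_bigr => y _; rewrite fe.
have alpha_in : forall g a, inS e (inv g) a -> inS e g (alpha g a).
  by move=> g a Ha; have [_ _ H _ _] := Hiso g; apply: H.
have alphaM : forall g a b, inS e (inv g) a -> inS e (inv g) b -> alpha g (a * b) = alpha g a * alpha g b.
  by move=> g a b Ha Hb; have [_ H _ _ _] := Hiso g; apply: H.
have unit : forall g, alpha g (e (inv g)) = e g.
  move=> g; have [_ HM Hin _ Hsurj] := Hiso g.
  have [v Hv Ev] := Hsurj _ (inS_e g).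
  have /inSE Hu := Hin _ (inS_e (inv g)).
  have := HM _ _ Hv (inS_e (inv g)).
  have /inSE <- := Hv. rewrite Ev => ->.
  by rewrite -eC -Hu.
have inS_tgt_inv : forall g a, inS e (inv g) a -> inS e (idm (src g)) a.
  by move=> g a H; have := Hideal _ _ H; have [_ -> _ _] := Hinv g.
have alphaK : forall g a, inS e g a -> alpha g (alpha (inv g) a) = a.
  move=> g a Ha.
  have [si ti gi ig] := Hinv g.
  have Ha' : inS e (inv (inv g)) a by rewrite invK.
  have H1 := alpha_in _ _ Ha'.
  have [_ ->] := Hcomp g (inv g) (esym ti) a Ha' H1 H1.
  by rewrite gi; apply: Hid; apply: Hideal.
have Phie : forall a w t, inS e (idm x) a -> inS e (idm w) t ->
    Phi alpha tau a * t = alpha (tau w) a * t.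
  move=> a w t Ha Ht; rewrite /Phi mulr_suml (bigD1 w) //= big1 ?addr0 // => y nyw.
  have Hu : inS e (tau y) (alpha (tau y) a) by apply: alpha_in; apply/Hgt1.
  have /Hgt2 /inSE -> := Hu.
  have /inSE -> := Ht.
  by rewrite -mulrA [e (idm y) * _]mulrA -eC -mulrA orth ?mulr0.
have PhiEx : forall a, inS e (idm x) a -> Phi alpha tau a * e (idm x) = a.
  move=> a Ha; rewrite (Phie a x _ Ha (inS_e _)).
  by rewrite Htaux Hid //; apply/esym/inSE.
split.
  move=> a [Ha Hinvar] g.
  set z := src g; set w := tgt g.
  have [szi twi gi ig] := Hinv g.
  have eiz : inS e (idm z) (e (inv g)) by apply: inS_tgt_inv; apply: inS_e.
  have ew : inS e (idm w) (e g) by apply: Hideal; apply: inS_e.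
  rewrite (Phie a z _ Ha eiz) (Phie a w _ Ha ew).
  have [_ _ _ _ Hsurj] := Hiso (tau z).
  have [d Hd Ed] := Hsurj _ (proj2 (Hgt2 z _) eiz).
  have Ha1 : forall y, inS e (inv (tau y)) a by move=> y; apply/Hgt1.
  have Hd' : inS e (idm x) d by apply/(Hgt1 z).
  have E1 : alpha (tau z) a * e (inv g) = alpha (tau z) (a * d) by rewrite alphaM // Ed.
  rewrite E1.
  have [stz ttz] := Htau z; have [stw ttw] := Htau w.
  set h := comp g (tau z).
  have sgh : src g = tgt (tau z) by rewrite ttz.
  have [sh th] := Hcompst _ _ sgh.
  have step1 : forall u, inS e (inv (tau z)) u -> inS e (inv g) (alpha (tau z) u) ->
      inS e (inv h) u /\ alpha g (alpha (tau z) u) = alpha h u.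
    move=> u Hu Hu'; apply: Hcomp => //; exact: alpha_in.
  have Hc : inS e (inv (tau z)) (a * d) by apply: inS_mull.
  have Hc' : inS e (inv g) (alpha (tau z) (a * d)) by rewrite -E1; apply: inS_mulr; apply: inS_e.
  have [Hch Ec] := step1 _ Hc Hc'.
  have [Hdh Edh] := step1 _ Hd (eq_ind_r _ (inS_e (inv g)) Ed).
  set s := inv (tau w).
  have [ss ts _ _] := Hinv (tau w).
  have ssh : src s = tgt h by rewrite ss th.
  have [sk tk] := Hcompst _ _ ssh.
  set k := comp s h.
  have step2 : forall u, inS e (inv h) u -> inS e (inv k) u /\ alpha h u = alpha (tau w) (alpha k u).
    move=> u Hu.
    have Hhu : inS e h (alpha h u) by apply: alpha_in.
    have Hhu' : inS e (inv s) (alpha h u).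
      rewrite /s invK; apply/Hgt2; rewrite /w -th; exact: Hideal.
    have [H1 H2] := Hcomp s h ssh u Hu Hhu' Hhu.
    split => //; rewrite -H2 alphaK //; by rewrite invK in Hhu'.
  have [Hck Eck] := step2 _ Hch.
  have [Hdk Edk] := step2 _ Hdh.
  have skx : src k = x by rewrite sk sh.
  have tkx : tgt k = x by rewrite tk ts.
  have Hinvk := Hinvar k skx tkx.
  have Hake : inS e (inv k) (a * e (inv k)) by apply: inS_mulr; apply: inS_e.
  have E2 : alpha k (a * d) = a * alpha k d.
    have /inSE Hdk2 := Hdk.
    have E3 : a * d = (a * e (inv k)) * d by rewrite -mulrA -eC -Hdk2.
    rewrite E3 alphaM // Hinvk -mulrA.
    have /inSE Hk : inS e k (alpha k d) by apply: alpha_in.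
    by rewrite -eC -Hk.
  have Hkdx : inS e (inv (tau w)) (alpha k d).
    apply/Hgt1; rewrite -tkx; apply: Hideal; exact: alpha_in.
  rewrite Ec Eck E2 alphaM //.
  by rewrite -unit -Ed Edh Edk.
split.
- move=> a b [Ha _] [Hb _]; rewrite /Phi -big_split /=; apply: eq_bigr => y _.
  have [H _ _ _ _] := Hiso (tau y); apply: H; exact/Hgt1.
- move=> a b [Ha _] [Hb _].
  rewrite {1}/Phi {2}/Phi mulr_sumr; apply: eq_bigr => y _.
  rewrite (Phie a y) //; last by apply/Hgt2; apply: alpha_in; apply/Hgt1.
  by apply: alphaM; apply/Hgt1.
- rewrite /Phi -sum1; apply: eq_bigr => y _.
  by rewrite -(einvtau y) unit etau.
- move=> a b [Ha _] [Hb _] E.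
  by rewrite -(PhiEx a Ha) -(PhiEx b Hb) E.
- move=> c Hc; exists (c * e (idm x)).
    split; first by exists c.
    move=> k sk tk.
    have H1 : e (idm x) * e (inv k) = e (inv k).
      have /inSE H := inS_tgt_inv _ _ (inS_e (inv k)); rewrite sk in H.
      by rewrite -eC -H.
    have H2 : e (idm x) * e k = e k.
      have /inSE H := Hideal _ _ (inS_e k); rewrite tk in H.
      by rewrite -eC -H.
    by rewrite -!mulrA H1 H2.
  rewrite /Phi.
  transitivity (\sum_y c * e (idm y)); last by rewrite -mulr_sumr sum1 mulr1.
  apply: eq_bigr => y _; by rewrite -(einvtau y) Hc etau.
Qed.
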